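(* Let $H$ be a connected finite loopless graph with a marked vertex $v_0$ and $L$ a connected finite graph with at least $\deg_H(v_0)$ vertices. Let $G$ be obtained from $H$ by deleting $v_0$, adding a disjoint copy of $L$, and attaching each edge of $H$ formerly incident to $v_0$ to a vertex of $L$, distinct edges to distinct vertices. If $L$ has two edge-disjoint spanning trees (i.e. $M(L)$ has two disjoint bases), then $f(M(G))\le f(M(H))$.
   Context: $M(K)$ denotes the graphic matroid of a graph $K$ (bases: edge sets of spanning trees for connected $K$). For a matroid $M$, the distance between bases $B,B'$ is $|B\triangle B'|$; the Borsuk number $f(M)$ is the minimum number of parts in a partition of the set of bases in which each part has diameter strictly smaller than the diameter of the set of all bases ($f(M)=+\infty$ if $M$ has exactly one basis). *)

(* Defs.v *)
From mathcomp Require Import all_boot all_order.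
Set Implicit Arguments. Unset Strict Implicit. Unset Printing Implicit Defensive.

(* Finite multigraphs: a finite vertex type V, a finite edge type E and an
   endpoint map  ends : E -> V * V  (orientation irrelevant; loops are the
   edges with equal endpoints, parallel edges are allowed). *)

Section Graph.
Variables (V E : finType) (ends : E -> V * V).

Definition adj (F : {set E}) : rel V :=
  fun x y => [exists e in F, (ends e == (x, y)) || (ends e == (y, x))].

Definition loopless : bool := [forall e, (ends e).1 != (ends e).2].

Definition connectedg : bool := [forall x, [forall y, connect (adj setT) x y]].

(* F contains no cycle: no edge of F has its endpoints joined by a path of
   the other edges of F (a loop is a cycle, as is a pair of parallel edges). *)
Definition acyclic (F : {set E}) : bool :=
  [forall e in F, ~~ connect (adj (F :\ e)) (ends e).1 (ends e).2].

(* bases of the graphic matroid M(K): maximal forests (= spanning trees when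
   K is connected) *)
Definition is_basis (F : {set E}) : bool :=
  acyclic F && [forall e, (e \notin F) ==> ~~ acyclic (e |: F)].

Definition bases : {set {set E}} := [set F | is_basis F].

Definition incident (v : V) (e : E) : bool :=
  ((ends e).1 == v) || ((ends e).2 == v).
Definition degree (v : V) : nat := #|[set e | incident v e]|.

End Graph.

Section Borsuk.
Variable E : finType.

Definition bdist (A B : {set E}) : nat := #|(A :\: B) :|: (B :\: A)|.

Definition diam (S : {set {set E}}) : nat :=
  \max_(A in S) \max_(B in S) bdist A B.

Definition borsuk_part (bs : {set {set E}}) (k : nat) : bool :=
  [exists P : {set {set {set E}}},
     [&& partition P bs, #|P| == k & [forall S in P, diam S < diam bs]]].

Lemma borsuk_part_ex (bs : {set {set E}}) :
  #|bs| != 1 -> exists k, borsuk_part bs k.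
Proof.
move=> bs1; exists #|bs|; apply/existsP.
exists (preim_partition id bs); apply/and3P; split.
- exact: preim_partitionP.
- rewrite /preim_partition /equivalence_partition card_in_imset //.
  move=> x y xb yb /setP /(_ y); rewrite !inE yb eqxx /= => /eqP.
  by move=> ->.
- apply/forallP => S; apply/implyP => /imsetP [x xb ->].
  have -> : [set y in bs | id x == id y] = [set x].
    by apply/setP=> y; rewrite !inE eq_sym; case: eqP => [->|]; rewrite ?xb ?andbF.
  have d0 : diam [set x] = 0.
    by rewrite /diam big_set1 big_set1 /bdist !setDv setU0 cards0.
  rewrite d0.
  have : 1 < #|bs|.
    have : 0 < #|bs| by apply/card_gt0P; exists x.
    by move: bs1; case: #|bs| => [|[|n]].
  case/card_gt1P => A [B [Ab Bb AB]].
  apply: (@leq_trans (bdist A B)).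
    rewrite lt0n cards_eq0; apply: contra AB => /eqP.
    move/setP => h; apply/eqP/setP => z; move: (h z); rewrite !inE.
    by case: (z \in A); case: (z \in B).
  rewrite /diam; apply: (leq_trans _ (leq_bigmax_cond _ Ab)).
  exact: (leq_bigmax_cond _ Bb).
Qed.

(* Borsuk number: None stands for +infinity (exactly one basis) *)
Definition borsuk (bs : {set {set E}}) : option nat :=
  match boolP (#|bs| == 1) with
  | AltTrue _ => None
  | AltFalse h => Some (ex_minn (borsuk_part_ex h))
  end.

End Borsuk.

Definition borsukM (V E : finType) (ends : E -> V * V) : option nat :=
  borsuk (bases ends).

(* order on nat extended by +infinity (= None) *)
Definition ole (a b : option nat) : bool :=
  match a, b with
  | _, None => true
  | None, Some _ => false
  | Some m, Some n => m <= n
  end.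

Section Glue.
Variables (VH EH : finType) (endsH : EH -> VH * VH) (v0 : VH).
Variables (VL EL : finType) (endsL : EL -> VL * VL) (attach : EH -> VL).

Definition VG : finType := ({x : VH | x != v0} + VL)%type.
Definition EG : finType := (EH + EL)%type.

Definition glue_vertex (e : EH) (x : VH) : VG :=
  match insub x with
  | Some u => inl u
  | None => inr (attach e)
  end.

Definition endsG (e : EG) : VG * VG :=
  match e with
  | inl e => (glue_vertex e (endsH e).1, glue_vertex e (endsH e).2)
  | inr e => (inr (endsL e).1, inr (endsL e).2)
  end.

End Glue.

(* Main.v *)
Require Import Defs.
From mathcomp Require Import all_boot all_order.
From mathcomp Require Import zify.
Set Implicit Arguments. Unset Strict Implicit. Unset Printing Implicit Defensive.


Lemma connect_map (T T' : finType) (r : rel T) (r' : rel T') (f : T -> T') :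
  (forall a b, r a b -> connect r' (f a) (f b)) ->
  forall a b, connect r a b -> connect r' (f a) (f b).
Proof.
move=> H a b /connectP [p]; elim: p a => [|c p IH] a /=; first by move=> _ ->.
case/andP=> rac pc lb; exact: connect_trans (H _ _ rac) (IH _ pc lb).
Qed.

Section GraphFacts.
Variables (V E : finType) (ends : E -> V * V).
Local Notation adj := (adj ends).
Local Notation acyclic := (acyclic ends).
Local Notation is_basis := (is_basis ends).
Implicit Types (F A : {set E}) (x y u v w : V) (e f : E).

Lemma adj_sym F : symmetric (adj F).
Proof.
move=> x y; apply/existsP/existsP => [][e He]; exists e; move: He; by rewrite orbC.
Qed.

Lemma csym F : connect_sym (adj F).
Proof. exact/sym_connect_sym/adj_sym. Qed.

Lemma adj_sub F (F' : {set E}) : F \subset F' -> forall x y, adj F x y -> adj F' x y.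
Proof.
move=> s x y /existsP [e /andP [eF h]]; apply/existsP; exists e.
by rewrite (subsetP s _ eF).
Qed.

Lemma connect_subF F (F' : {set E}) : F \subset F' ->
  forall x y, connect (adj F) x y -> connect (adj F') x y.
Proof. move=> s; apply: connect_sub => x y h; apply: connect1; exact: adj_sub h. Qed.

Lemma adj_ends F e : e \in F -> adj F (ends e).1 (ends e).2.
Proof. move=> eF; apply/existsP; exists e; by rewrite eF -surjective_pairing eqxx. Qed.

Lemma adjP F x y : adj F x y ->
  exists2 e, e \in F & (ends e = (x, y) \/ ends e = (y, x)).
Proof.
case/existsP => e /andP [eF /orP [] /eqP h]; exists e => //; by [left|right].
Qed.

Lemma acyclicS F (F' : {set E}) : F' \subset F -> acyclic F -> acyclic F'.
Proof.
move=> s /forallP h; apply/forallP => e; apply/implyP => eF'.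
have := h e; rewrite (subsetP s _ eF') /=; apply: contra.
apply: connect_subF; exact: setSD.
Qed.

Lemma connect_add F e x y u v : ends e = (x, y) ->
  connect (adj (e |: F)) u v ->
  [|| connect (adj F) u v, connect (adj F) u x && connect (adj F) y v
    | connect (adj F) u y && connect (adj F) x v].
Proof.
move=> exy /connectP [p]; elim: p u => [|w p IH] u /=.
  by move=> _ ->; rewrite connect0.
have sy := csym F.
case/andP=> uw pw lv; have := IH _ pw lv.
case/adjP: uw => f; rewrite in_setU1 => /orP [/eqP -> | fF] hf.
- rewrite exy in hf; case: hf => [[<- <-]|[<- <-]].
  + case/or3P => [h|/andP [h1 h2]|/andP [h1 h2]].
    * by rewrite connect0 h orbT.
    * by rewrite (connect_trans _ h2) // sy.
    * by rewrite h2.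
  + case/or3P => [h|/andP [h1 h2]|/andP [h1 h2]].
    * by rewrite connect0 h !orbT.
    * by rewrite h2.
    * by rewrite (connect_trans _ h2) // sy.
- have cuw : connect (adj F) u w.
    apply: connect1; case: hf => h; [|rewrite adj_sym];
      by apply/existsP; exists f; rewrite fF h eqxx ?orbT.
  case/or3P => [h|/andP [h1 h2]|/andP [h1 h2]].
  + by rewrite (connect_trans cuw h).
  + by rewrite (connect_trans cuw h1) h2 orbT.
  + by rewrite (connect_trans cuw h1) h2 !orbT.
Qed.

Lemma cyc_add F e : acyclic F -> e \notin F -> ~~ acyclic (e |: F) ->
  connect (adj F) (ends e).1 (ends e).2.
Proof.
move=> acF eF /forallPn [f]; rewrite negb_imply negbK => /andP [fin cf].
have sy := csym F.
case: (eqVneq f e) => [fe|fe].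
  by move: cf; rewrite fe setU1K.
have fF : f \in F by move: fin; rewrite in_setU1 (negbTE fe).
have eq1 : (e |: F) :\ f = e |: (F :\ f).
  apply/setP => z; rewrite !inE; case: (eqVneq z e) => [->|] //=; by rewrite eq_sym fe.
move: cf; rewrite eq1 => /(connect_add (surjective_pairing (ends e))).
have nc : ~~ connect (adj (F :\ f)) (ends f).1 (ends f).2.
  by move/forallP: acF => /(_ f); rewrite fF.
have sub := connect_subF (subD1set F f).
have cf12 : connect (adj F) (ends f).1 (ends f).2 by apply: connect1; apply: adj_ends.
rewrite (negbTE nc) /= => /orP [/andP [h1 h2]|/andP [h1 h2]].
- have s1 := sub _ _ h1; have s2 := sub _ _ h2.
  rewrite (csym F) in s1; rewrite (csym F) in s2.
  exact: connect_trans s1 (connect_trans cf12 s2).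
- have s1 := sub _ _ h1; have s2 := sub _ _ h2.
  rewrite (csym F) in cf12.
  exact: connect_trans s2 (connect_trans cf12 s1).
Qed.

Lemma basis_span F : connectedg ends -> is_basis F ->
  forall x y, connect (adj F) x y.
Proof.
move=> /forallP cG /andP [acF /forallP mF] x y.
have := forallP (cG x) y; apply: connect_sub => a b /adjP [e _ he].
have ce : connect (adj F) (ends e).1 (ends e).2.
  case eF: (e \in F); first by apply: connect1; apply: adj_ends.
  by apply: cyc_add => //; [rewrite eF | move/implyP: (mF e); rewrite eF; apply].
case: he => he; rewrite he /= in ce => //; by rewrite csym.
Qed.

Lemma acyclic0 : acyclic set0.
Proof. by apply/forallP => e; rewrite inE. Qed.

Lemma basis_sub F : (forall x y, connect (adj F) x y) ->
  exists2 F0 : {set E}, F0 \subset F & is_basis F0.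
Proof.
move=> spF.
pose P := fun A : {set E} => (A \subset F) && acyclic A.
have P0 : P set0 by rewrite /P sub0set acyclic0.
case: (@arg_maxnP _ set0 P (fun A => #|A|) P0) => F0 /andP [sF0 acF0] mx.
have ce : forall e, e \in F -> connect (adj F0) (ends e).1 (ends e).2.
  move=> e eF; case eF0: (e \in F0); first by apply: connect1; apply: adj_ends.
  apply: cyc_add => //; first by rewrite eF0.
  apply/negP => ac; have := mx (e |: F0); rewrite /P ac andbT subUset sub1set eF sF0.
  by rewrite cardsU1 eF0 /= ltnn => /(_ isT).
have sp0 : forall x y, connect (adj F0) x y.
  move=> x y; have := spF x y; apply: connect_sub => a b /adjP [e eF he].
  have := ce e eF; case: he => -> //=; by rewrite csym.
exists F0 => //; rewrite /is_basis acF0 /=.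
apply/forallP => e; apply/implyP => eF0; apply/forallPn; exists e.
by rewrite setU11 /= negbK setU1K.
Qed.

Definition cls F v := [set w | connect (adj F) v w].
Definition classes F := (cls F) @: [set: V].

Lemma cls_eq F v w : (cls F v == cls F w) = connect (adj F) v w.
Proof.
apply/eqP/idP => [h|h].
  have : w \in cls F w by rewrite inE connect0.
  by rewrite -h inE.
apply/setP => z; rewrite !inE; exact: (same_connect (csym F) h z).
Qed.

Lemma rank F : acyclic F -> #|F| + #|classes F| = #|V|.
Proof.
move: {2}#|F| (erefl #|F|) => n; elim: n F => [|n IH] F cF acF.
  have F0 : F = set0 by apply/eqP; rewrite -cards_eq0 cF.
  subst F; rewrite cards0 add0n.
  have h0 : cls set0 =1 fun v => [set v].
    move=> v; apply/setP => w; rewrite !inE.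
    apply/idP/idP => [/connectP [[|z p] /=]|/eqP ->]; last exact: connect0.
    - by move=> _ ->.
    - by case/andP => /existsP [e]; rewrite inE.
  by rewrite /classes (eq_imset _ h0) card_imset ?cardsT //; exact: set1_inj.
have : 0 < #|F| by rewrite cF.
case/card_gt0P => e eF.
set F' := F :\ e.
have cF' : #|F'| = n by move: cF; rewrite (cardsD1 e) eF add1n => [[]].
have acF' : acyclic F' by apply: acyclicS acF; apply: subD1set.
have IHF := IH F' cF' acF'.
have defF : F = e |: F' by rewrite setD1K.
have nxy : ~~ connect (adj F') (ends e).1 (ends e).2.
  by move/forallP: acF => /(_ e); rewrite eF.
set x := (ends e).1 in nxy *; set y := (ends e).2 in nxy *.
have exy : ends e = (x, y) by rewrite /x /y -surjective_pairing.
have sy := csym F'.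
pose U := cls F' x :|: cls F' y.
have inU : forall w, (w \in U) = connect (adj F') x w || connect (adj F') y w.
  by move=> w; rewrite !inE.
have cxyF : connect (adj F) x y by apply: connect1; rewrite /x /y; apply: adj_ends.
have syF := csym F.
have subF : forall a b, connect (adj F') a b -> connect (adj F) a b.
  by apply: connect_subF; apply: subD1set.
have cFe : forall v w, connect (adj F) v w =
    connect (adj F') v w || ((v \in U) && (w \in U)).
  move=> v w; apply/idP/idP.
    rewrite defF => /(connect_add exy) /or3P [->//|/andP [h1 h2]|/andP [h1 h2]].
    - by rewrite !inU (sy x) h1 h2 !orbT.
    - by rewrite !inU (sy y) h1 h2 !orbT.
  case/orP => [/subF //|/andP []]; rewrite !inU.
  have hx : forall z, connect (adj F') x z || connect (adj F') y z ->
      connect (adj F) x z.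
    move=> z /orP [/subF //|/subF h]; exact: connect_trans cxyF h.
  move=> /hx hv /hx hw; apply: connect_trans hw; by rewrite syF.
have clsU : forall v, v \in U -> cls F v = U.
  move=> v vU; apply/setP => w; rewrite inE cFe vU /=.
  apply/orP/idP => [[h|//]|->]; last by right.
  move: vU; rewrite !inU => /orP [] h'; by rewrite (connect_trans h' h) ?orbT.
have clsN : forall v, v \notin U -> cls F v = cls F' v.
  move=> v vU; apply/setP => w; by rewrite !inE cFe (negbTE vU) orbF.
pose K := classes F' :\ cls F' x :\ cls F' y.
have xU : x \in U by rewrite inU connect0.
have memK : forall C, (C \in K) = [exists v, (v \notin U) && (C == cls F' v)].
  move=> C; rewrite !inE; apply/idP/existsP.
    case/and3P => Cy Cx /imsetP [v _ Cv]; exists v; rewrite Cv eqxx andbT inU.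
    rewrite Cv eq_sym cls_eq in Cy; rewrite Cv eq_sym cls_eq in Cx.
    by rewrite (negbTE Cx) (negbTE Cy).
  case=> v /andP [vU /eqP ->]; rewrite imset_f ?inE // andbT.
  by rewrite !cls_eq; move: vU; rewrite inU negb_or (sy x) (sy y) => /andP [-> ->].
have defC : classes F = U |: K.
  apply/setP => C; rewrite in_setU1 memK; apply/imsetP/orP.
    case=> v _ ->; case vU: (v \in U); first by left; rewrite clsU.
    have vU' : v \notin U by rewrite vU.
    by right; apply/existsP; exists v; rewrite vU' clsN // eqxx.
  case=> [/eqP ->|/existsP [v /andP [vU /eqP ->]]].
    by exists x; rewrite ?inE // clsU.
  by exists v; rewrite ?inE // clsN.
have UK : U \notin K.
  rewrite memK; apply/existsP => [[v /andP [vU /eqP hU]]].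
  by move: xU; rewrite hU inE (sy v) => h; move: vU; rewrite inU h.
have cardF : #|classes F| = #|K|.+1 by rewrite defC cardsU1 UK.
have cardF' : #|classes F'| = #|K|.+2.
  rewrite (cardsD1 (cls F' x)) (cardsD1 (cls F' y) (classes F' :\ cls F' x)).
  by rewrite !imset_f ?inE // cls_eq (sy y) (negbTE nxy) /= imset_f ?inE.
move: IHF; rewrite cardF cardF' cF => <-; lia.
Qed.

Lemma basis_card F (v : V) : connectedg ends -> is_basis F -> #|F|.+1 = #|V|.
Proof.
move=> cG bF; have := rank (proj1 (andP bF)).
have -> : classes F = [set [set: V]].
  apply/setP => C; rewrite inE; apply/imsetP/eqP => [[w _ ->]|->].
    by apply/setP => z; rewrite !inE (basis_span cG bF).
  exists v; rewrite ?inE //; apply/setP => z; by rewrite !inE (basis_span cG bF).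
by rewrite cards1 addn1.
Qed.

Lemma span_basis F (v : V) : connectedg ends ->
  (forall x y, connect (adj F) x y) -> #|F|.+1 = #|V| -> is_basis F.
Proof.
move=> cG sp cF; case: (basis_sub sp) => F0 sF0 bF0.
have := basis_card v cG bF0; rewrite -cF => [[c0]].
suff -> : F = F0 by [].
by apply/eqP; rewrite eq_sym eqEcard sF0 c0 leqnn.
Qed.

End GraphFacts.


Section Dist.
Variable T : finType.
Implicit Types (A B X Y : {set T}) (S : {set {set T}}).

Lemma card3 A B C : #|A :|: B :|: C| <= #|A| + #|B| + #|C|.
Proof.
apply: leq_trans (leq_card_setU _ _) _; rewrite leq_add2r; exact: leq_card_setU.
Qed.

Lemma bdist_le A B : bdist A B <= #|A| + #|B|.
Proof.
apply: leq_trans (leq_card_setU _ _) _.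
by apply: leq_add; apply: subset_leq_card; apply: subsetDl.
Qed.

Lemma bdist_sub X Y X0 Y0 : X0 \subset X -> Y0 \subset Y ->
  bdist X Y <= bdist X0 Y0 + #|X :\: X0| + #|Y :\: Y0|.
Proof.
move=> sX sY; apply: leq_trans (card3 _ _ _); apply: subset_leq_card.
apply/subsetP => z; have h1 : (z \in X0) ==> (z \in X) by apply/implyP/subsetP.
have h2 : (z \in Y0) ==> (z \in Y) by apply/implyP/subsetP.
move: h1 h2; rewrite !inE.
by case: (z \in X0); case: (z \in X); case: (z \in Y0); case: (z \in Y).
Qed.

Lemma bdist_disj A B : [disjoint A & B] -> bdist A B = #|A| + #|B|.
Proof.
move=> dAB; rewrite /bdist.
have -> : A :\: B = A by apply/setDidPl.
have -> : B :\: A = B by apply/setDidPl; rewrite disjoint_sym.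
by case: (leq_card_setU A B) => _; rewrite dAB => /eqP.
Qed.

Lemma leq_diam S A B : A \in S -> B \in S -> bdist A B <= diam S.
Proof.
move=> AS BS; rewrite /diam.
apply: (leq_trans _ (leq_bigmax_cond _ AS)).
exact: (leq_bigmax_cond _ BS).
Qed.

Lemma diam_le S m : (forall A B, A \in S -> B \in S -> bdist A B <= m) -> diam S <= m.
Proof. move=> h; apply/bigmax_leqP => A AS; apply/bigmax_leqP => B BS; exact: h. Qed.

Lemma diam_card1 S : #|S| = 1 -> diam S = 0.
Proof.
move/eqP/cards1P => [A ->]; by rewrite /diam !big_set1 /bdist !setDv setU0 cards0.
Qed.

Lemma diam_gt0 S : 1 < #|S| -> 0 < diam S.
Proof.
case/card_gt1P => A [B [Ab Bb AB]].
apply: (@leq_trans (bdist A B)); last exact: leq_diam.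
rewrite lt0n cards_eq0; apply: contra AB => /eqP.
move/setP => h; apply/eqP/setP => z; move: (h z); rewrite !inE.
by case: (z \in A); case: (z \in B).
Qed.

Lemma diam_max S : 0 < #|S| -> exists A, exists B,
  [/\ A \in S, B \in S & bdist A B = diam S].
Proof.
move=> S0; rewrite /diam; case: (eq_bigmax_cond (fun A => \max_(B in S) bdist A B) S0).
move=> A AS ->; case: (eq_bigmax_cond (fun B => bdist A B) S0) => B BS ->.
by exists A, B.
Qed.

End Dist.

Lemma transfer (T T' : finType) (bsG : {set {set T}}) (bsH : {set {set T'}})
  (phi : {set T} -> {set T'}) c k :
  (forall B, B \in bsG -> phi B \in bsH) ->
  (forall B B', B \in bsG -> B' \in bsG -> bdist B B' <= bdist (phi B) (phi B') + c) ->
  diam bsH + c <= diam bsG -> borsuk_part bsH k ->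
  exists2 k', k' <= k & borsuk_part bsG k'.
Proof.
move=> phiH hd hD /existsP [P /and3P [pP /eqP cP /forallP dP]].
pose f B := pblock P (phi B).
have fP : forall B, B \in bsG -> f B \in P.
  by move=> B BG; apply: pblock_mem; rewrite (cover_partition pP) phiH.
pose Q := preim_partition f bsG.
exists #|Q|.
- rewrite -cP.
  have -> : Q = (fun S => [set y in bsG | S == f y]) @: (f @: bsG).
    by rewrite /Q /preim_partition /equivalence_partition -imset_comp.
  apply: leq_trans (leq_imset_card _ _) _.
  apply: subset_leq_card; apply/subsetP => S /imsetP [B BG ->]; exact: fP.
- apply/existsP; exists Q; rewrite preim_partitionP eqxx /=.
  apply/forallP => S; apply/implyP => /imsetP [B BG ->].
  have dS := dP (f B); rewrite fP //= in dS.
  have inf : forall y, y \in bsG -> f B == f y -> phi y \in f B.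
    move=> y yG /eqP ->; rewrite mem_pblock (cover_partition pP); exact: phiH.
  have : diam [set y in bsG | f B == f y] <= (diam bsG).-1.
    apply: diam_le => y z; rewrite !inE => /andP [yG fy] /andP [zG fz].
    have := leq_diam (inf _ yG fy) (inf _ zG fz).
    have := hd _ _ yG zG; lia.
  have g0 : 0 < diam bsG by move: dS hD; lia.
  move=> h; apply: leq_ltn_trans h _; by rewrite ltn_predL.
Qed.


Section GlueFacts.
Variables (VH EH : finType) (endsH : EH -> VH * VH) (v0 : VH).
Variables (VL EL : finType) (endsL : EL -> VL * VL) (attach : EH -> VL).

Local Notation VG := (VG v0 VL).
Local Notation EG := (EG EH EL).
Local Notation eG := (endsG endsH v0 endsL attach).
Local Notation glue := (glue_vertex v0 attach).

Definition piV (a : VG) : VH := match a with inl u => val u | inr _ => v0 end.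
Definition pl (S : {set EG}) : {set EH} := [set e | inl e \in S].
Definition pr (S : {set EG}) : {set EL} := [set l | inr l \in S].
Definition glift (A : {set EH}) (T : {set EL}) : {set EG} :=
  [set f : EG | match f with inl e => e \in A | inr l => l \in T end].

Lemma pl_glift A T : pl (glift A T) = A.
Proof. by apply/setP => e; rewrite !inE. Qed.
Lemma pr_glift A T : pr (glift A T) = T.
Proof. by apply/setP => e; rewrite !inE. Qed.

Lemma card_split (S : {set EG}) : #|S| = #|pl S| + #|pr S|.
Proof.
have inlI : injective (@inl EH EL) by move=> a b [].
have inrI : injective (@inr EH EL) by move=> a b [].
have eS : S = inl @: pl S :|: inr @: pr S.
  apply/setP => [[e|l]]; rewrite !inE.
  - apply/idP/orP => [h|]; first by left; apply/imsetP; exists e; rewrite ?inE.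
    case=> /imsetP [x xin h]; last by case: h.
    by case: h => ->; rewrite inE in xin.
  - apply/idP/orP => [h|]; first by right; apply/imsetP; exists l; rewrite ?inE.
    case=> /imsetP [x xin h]; first by case: h.
    by case: h => ->; rewrite inE in xin.
rewrite {1}eS cardsU !card_imset //.
have -> : inl @: pl S :&: inr @: pr S = set0.
  apply/setP => [[e|l]]; rewrite !inE; apply/andP => [[/imsetP [x _ hx] /imsetP [y _ hy]]].
  - by rewrite hy in hx.
  - by rewrite hy in hx.
by rewrite cards0 subn0.
Qed.

Lemma bdist_split (S S' : {set EG}) :
  bdist S S' = bdist (pl S) (pl S') + bdist (pr S) (pr S').
Proof.
rewrite /bdist card_split; congr (_ + _); apply: eq_card => e; by rewrite !inE.
Qed.

Lemma pi_glue e x : piV (glue e x) = x.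
Proof. rewrite /glue_vertex; case: insubP => [u _ <- //|/negPn/eqP -> //]. Qed.

Lemma proj_connect (F : {set EG}) a b :
  connect (adj eG F) a b -> connect (adj endsH (pl F)) (piV a) (piV b).
Proof.
apply: connect_map => {}a {}b /adjP [[e|l] fF hf].
- have eF : e \in pl F by rewrite inE.
  have := adj_ends endsH eF; case: hf => /= [[<- <-]|[<- <-]]; rewrite !pi_glue.
  + exact: connect1.
  + by rewrite csym => /connect1.
- by case: hf => /= [[<- <-]|[<- <-]]; rewrite connect0.
Qed.

Variable w0 : VL.

Definition sec (x : VH) : VG := if insub x is Some u then inl u else inr w0.

Lemma pi_sec x : piV (sec x) = x.
Proof. rewrite /sec; case: insubP => [u _ <- //|/negPn/eqP -> //]. Qed.

Lemma pl_span (B : {set EG}) : (forall a b, connect (adj eG B) a b) ->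
  forall x y, connect (adj endsH (pl B)) x y.
Proof.
move=> sp x y; rewrite -(pi_sec x) -(pi_sec y); exact: proj_connect.
Qed.

Lemma glift_span A T : (forall x y, connect (adj endsH A) x y) ->
  (forall x y, connect (adj endsL T) x y) ->
  forall a b, connect (adj eG (glift A T)) a b.
Proof.
move=> spA spT.
set F := glift A T.
have sy := csym eG F.
have hr : forall w w', connect (adj eG F) (inr w) (inr w').
  move=> w w'; have := spT w w'; apply: connect_map => {}w {}w' /adjP [l lT hl].
  apply: connect1; apply/existsP; exists (inr l); rewrite inE lT /=.
  by case: hl => ->; rewrite eqxx ?orbT.
have hg : forall e z, connect (adj eG F) (glue e z) (sec z).
  move=> e z; rewrite /glue_vertex /sec; case: insubP => [u _ _|_]; first exact: connect0.
  exact: hr.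
have hs : forall x y, connect (adj endsH A) x y -> connect (adj eG F) (sec x) (sec y).
  apply: connect_map => x y /adjP [e eA he].
  have ce : connect (adj eG F) (glue e (endsH e).1) (glue e (endsH e).2).
    apply: connect1; apply/existsP; exists (inl e); by rewrite inE eA /= eqxx.
  case: he => he; rewrite he /= in ce.
  - apply: connect_trans (connect_trans ce (hg _ _)); by rewrite sy.
  - rewrite sy; apply: connect_trans (connect_trans ce (hg _ _)); by rewrite sy.
have ha : forall a, connect (adj eG F) a (sec (piV a)).
  case=> [u|w] /=; first by rewrite /sec valK connect0.
  by rewrite /sec insubF ?eqxx //; apply: hr.
move=> a b; apply: connect_trans (ha a) _; apply: connect_trans (hs _ _ (spA _ _)) _.
by rewrite sy.
Qed.

End GlueFacts.


Lemma ar1 b p r d g h l : p <= b -> d.+1 = g -> p.+1 = h -> d = b + r ->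
  g = h.-1 + l -> 0 < h -> b - p + r = l.-1.
Proof. lia. Qed.
Lemma ar2 a q x1 x2 s r1 r2 L : a <= q + x1 + x2 -> s <= r1 + r2 ->
  x1 + r1 = L -> x2 + r2 = L -> a + s <= q + (L + L).
Proof. lia. Qed.
Lemma ar3 a t h l : a.+1 = h -> t.+1 = l -> (a + t).+1 = h.-1 + l.
Proof. lia. Qed.
Lemma ar4 dh dg t1 t2 l : dh + (t1 + t2) <= dg -> t1.+1 = l -> t2.+1 = l ->
  dh + (l.-1 + l.-1) <= dg.
Proof. lia. Qed.
Lemma ar5 dh dg c : dg = 0 -> 0 < dh -> dh + c <= dg -> False.
Proof. lia. Qed.
Lemma ar6 n : n != 1 -> 0 < n -> 1 < n.
Proof. lia. Qed.

Unset Implicit Arguments. Set Strict Implicit.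

Theorem proposition6p5
  (VH EH : finType) (endsH : EH -> VH * VH) (v0 : VH)
  (VL EL : finType) (endsL : EL -> VL * VL) (attach : EH -> VL) :
  connectedg endsH -> loopless endsH ->
  connectedg endsL ->
  degree endsH v0 <= #|VL| ->
  {in [pred e | incident endsH v0 e] &, injective attach} ->
  (exists B1 B2, [/\ B1 \in bases endsL, B2 \in bases endsL
                   & [disjoint B1 & B2]]) ->
  ole (borsukM (endsG endsH v0 endsL attach)) (borsukM endsH).
Proof.
move=> cH _ cL _ _ [T1 [T2 [T1b T2b dT]]].
rewrite inE in T1b; rewrite inE in T2b.
set eG := endsG endsH v0 endsL attach.
rewrite /borsukM {2}/borsuk.
destruct (boolP (#|bases endsH| == 1)) as [hH|hH]; first by case: (borsuk _).
case: ex_minnP => k Pk _.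
have [A0 _ A0b] : exists2 A0 : {set EH}, A0 \subset setT & is_basis endsH A0.
  apply: basis_sub => x y; exact: (forallP (forallP cH x) y).
have bH0 : 0 < #|bases endsH| by apply/card_gt0P; exists A0; rewrite inE.
have bH1 : 1 < #|bases endsH| := ar6 hH bH0.
have [e0 _] : exists e : EH, true.
  case/card_gt1P: bH1 => A1 [A2 [_ _ A12]].
  case: (pickP (@predT EH)) => [e _|h]; first by exists e.
  by case/eqP: A12; apply/setP => e; have := h e.
set w0 := attach e0.
have cardH : forall A, A \in bases endsH -> #|A|.+1 = #|VH|.
  by move=> A; rewrite inE; apply: basis_card v0 cH.
have cardL : forall T, is_basis endsL T -> #|T|.+1 = #|VL|.
  by move=> T; apply: basis_card w0 cL.
have spH := basis_span cH A0b.
have spT1 := basis_span cL T1b.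
have spT2 := basis_span cL T2b.
have cG : connectedg eG.
  apply/forallP => a; apply/forallP => b.
  apply: (connect_subF (subsetT (glift A0 T1))).
  rewrite /eG; exact: (glift_span attach w0 spH spT1).
have cardVG : #|VG v0 VL| = #|VH|.-1 + #|VL|.
  rewrite card_sum card_sig; congr (_ + _); exact: cardC1.
have VH0 : 0 < #|VH| by apply/card_gt0P; exists v0.
have cardG : forall B, B \in bases eG -> #|B|.+1 = #|VG v0 VL|.
  by move=> B; rewrite inE; apply: basis_card (inr w0) cG.
pose phi (B : {set EG EH EL}) := odflt set0 [pick A in bases endsH | A \subset pl B].
have phiP : forall B, B \in bases eG -> phi B \in bases endsH /\ phi B \subset pl B.
  move=> B Bb.
  have spB : forall x y, connect (adj endsH (pl B)) x y.
    apply: (pl_span (endsL:=endsL) (attach:=attach) w0); apply: basis_span cG _; by rewrite inE in Bb.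
  rewrite /phi; case: pickP => [A /andP [h1 h2] //|h].
  case: (basis_sub spB) => A sA bA; have := h A; by rewrite inE bA sA.
pose c := #|VL|.-1 + #|VL|.-1.
have hd : forall B B', B \in bases eG -> B' \in bases eG ->
    bdist B B' <= bdist (phi B) (phi B') + c.
  move=> B B' Bb B'b.
  have cB : forall B, B \in bases eG -> #|pl B :\: phi B| + #|pr B| = #|VL|.-1.
    move=> D Db; have [p1 p2] := phiP D Db.
    rewrite cardsD (setIidPr p2).
    exact: (ar1 (subset_leq_card p2) (cardG D Db) (cardH _ p1) (card_split D) cardVG VH0).
  have [_ s1] := phiP B Bb; have [_ s2] := phiP B' B'b.
  rewrite bdist_split.
  exact: (ar2 (bdist_sub s1 s2) (bdist_le (pr B) (pr B')) (cB B Bb) (cB B' B'b)).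
have hD : diam (bases endsH) + c <= diam (bases eG).
  have [A1 [A2 [A1b A2b dA]]] := diam_max bH0.
  have spA : forall A, A \in bases endsH -> forall x y, connect (adj endsH A) x y.
    by move=> A; rewrite inE; apply: basis_span cH.
  have gb : forall A T, A \in bases endsH -> is_basis endsL T ->
      glift A T \in bases eG.
    move=> A T Ab Tb; rewrite inE; apply: span_basis (inr w0) cG _ _.
      rewrite /eG; apply: (glift_span attach w0); [exact: spA Ab | exact: basis_span cL Tb].
    rewrite card_split pl_glift pr_glift cardVG.
    exact: (ar3 (cardH _ Ab) (cardL _ Tb)).
  have h1 := leq_diam (gb _ _ A1b T1b) (gb _ _ A2b T2b).
  rewrite bdist_split !pl_glift !pr_glift dA (bdist_disj dT) in h1.
  exact: (ar4 h1 (cardL _ T1b) (cardL _ T2b)).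
have [k' k'k Pk'] := transfer (fun B Bb => proj1 (phiP B Bb)) hd hD Pk.
rewrite /borsuk; destruct (boolP (#|bases eG| == 1)) as [hG|hG].
  by case: (ar5 (diam_card1 (eqP hG)) (diam_gt0 bH1) hD).
case: ex_minnP => m Pm minm /=.
exact: leq_trans (minm _ Pk') k'k.
Qed.
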